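(* Let $D$ be a locatable digraph of order $n$ with $\gamma_{OL}(D)=n$. Then $\mathcal{H}(D)$ is a disjoint union of rooted directed trees, such that for each root $r$ of one of these trees, $f^-(r)$ is domination-forced in $D$ (and thus $r$ has only one in-neighbour in $D$), and for each other vertex $v$, $f^-(v)$ is location-forced in $D$ (and $v$ has an in-neighbour in $\mathcal{H}(D)$).
   Context: Digraphs are finite and may contain loops; between two distinct vertices there may be arcs in one or both directions, no repeated arcs. $N^-(v)=\{u: uv\text{ is an arc}\}$ (contains $v$ iff $v$ has a loop). An OLD set of $D$ is a set $S\subseteq V(D)$ such that every vertex has an in-neighbour in $S$ and for every two distinct vertices $u,w$ some vertex of $S$ lies in exactly one of $N^-(u),N^-(w)$. $D$ is locatable if it has an OLD set, and then $\gamma_{OL}(D)$ is the minimum size of an OLD set. A vertex $v$ is domination-forced if some vertex $w$ has $N^-(w)=\{v\}$; it is location-forced if there are distinct vertices $x,y$ with $N^-(x)\ominus N^-(y)=\{v\}$ ($\ominus$ = symmetric difference). An arc $xy$ (possibly a loop) is forcing if $N^-(y)=\{x\}$ or there is a vertex $z$ with $N^-(z)=N^-(y)\setminus\{x\}$. In a locatable digraph $D$ of order $n$ with $\gamma_{OL}(D)=n$, every vertex $v$ is the head of exactly one forcing arc; $f^-(v)$ denotes its tail (so $f^-(v)=v$ if $v$ has a forcing loop). $\mathcal{H}(D)$ is the digraph on vertex set $V(D)$ with an arc from $x$ to $y$ if and only if there exists a location-forced vertex $v$ of $D$ with $N^-(x)=N^-(y)\setminus\{v\}$. A rooted directed tree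 is a digraph without loops and directed 2-cycles whose underlying undirected graph is a tree, with a single source (the root) and every arc oriented away from the root; a single vertex is allowed. *)

(* Defs.v *)
From mathcomp Require Import all_boot.
Set Implicit Arguments. Unset Strict Implicit. Unset Printing Implicit Defensive.

(* A digraph is a finite vertex type V with an arc relation [arc : rel V];
   [arc u v] means uv is an arc. Loops allowed (arc v v), no multi-arcs. *)
Section Digraphs.
Variables (V : finType) (arc : rel V).

Definition Nin (v : V) : {set V} := [set u | arc u v].

Definition symdiff (A B : {set V}) : {set V} := (A :\: B) :|: (B :\: A).

Definition is_OLD (S : {set V}) : bool :=
  [forall v, [exists u in S, u \in Nin v]] &&
  [forall u, forall w, (u != w) ==> [exists s in S, (s \in Nin u) != (s \in Nin w)]].

Definition locatable : Prop := exists S, is_OLD S.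

(* minimum size of an OLD set (meaningful when locatable) *)
Definition gamma_OL : nat := \big[minn/#|V|]_(S : {set V} | is_OLD S) #|S|.

Definition dom_forced (v : V) : bool := [exists w, Nin w == [set v]].

Definition loc_forced (v : V) : bool :=
  [exists x, exists y, (x != y) && (symdiff (Nin x) (Nin y) == [set v])].

Definition forcing (x y : V) : bool :=
  arc x y && ((Nin y == [set x]) || [exists z, Nin z == Nin y :\ x]).

(* f^-(v): the tail of the (unique, when gamma_OL = n) forcing arc with head v *)
Definition fminus (v : V) : V := odflt v [pick x | forcing x v].

Definition Harc (x y : V) : bool :=
  [exists v, [&& loc_forced v, v \in Nin y & Nin x == Nin y :\ v]].

End Digraphs.

Section Trees.
Variables (V : finType) (h : rel V).

Definition uadj : rel V := fun a b => (a != b) && (h a b || h b a).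

Definition wcomp (x : V) : {set V} := [set y | connect (fun a b => h a b || h b a) x y].

Definition rooted_dtree (C : {set V}) (r : V) : Prop :=
  r \in C /\
  (forall x, x \in C -> ~~ h x x) /\
  (forall x y, x \in C -> y \in C -> ~~ (h x y && h y x)) /\
  (forall x y, x \in C -> y \in C ->
      connect (fun a b => [&& a \in C, b \in C & uadj a b]) x y) /\
  (~ exists p : seq V, [/\ uniq p, 3 <= size p, all (mem C) p & cycle uadj p]) /\
  (forall s, s \in C -> ((forall x, x \in C -> ~~ h x s) <-> s = r)) /\
  (forall v, v \in C -> connect (fun a b => [&& a \in C, b \in C & h a b]) r v).

Definition forest_of_rooted_trees : Prop :=
  forall x, exists r, rooted_dtree (wcomp x) r.

End Trees.

(* Main.v *)
Require Import Defs.
From mathcomp Require Import all_boot zify.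
Set Implicit Arguments. Unset Strict Implicit. Unset Printing Implicit Defensive.

Section Forest.
Variables (V : finType) (h : rel V) (rho : V -> nat).
Hypothesis hrho : forall x y, h x y -> rho y = (rho x).+1.
Hypothesis hin : forall a b y, h a y -> h b y -> a = b.

Lemma connect_last (e : rel V) a v :
  connect e a v -> a = v \/ exists2 p, connect e a p & e p v.
Proof.
case/connectP => p; elim/last_ind: p => [|p w _] /=; first by move=> _ ->; left.
rewrite rcons_path last_rcons => /andP[pp ew] ->; right; exists (last a p) => //.
by apply/connectP; exists p.
Qed.

Definition isroot r := [forall y, ~~ h y r].

Lemma exists_root_aux n : forall v, rho v = n -> exists r, isroot r && connect h r v.
Proof.
elim/ltn_ind: n => n IH v hv.
case: (boolP (isroot v)) => [rv|]; first by exists v; rewrite rv connect0.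
move=> /forallPn [y]; rewrite negbK => hyv.
have [|r /andP[rr cr]] := IH (rho y) _ y erefl; first by rewrite -hv (hrho hyv).
by exists r; rewrite rr (connect_trans cr (connect1 hyv)).
Qed.

Lemma root_uniq_aux n : forall a b v, rho v = n -> isroot a -> isroot b ->
  connect h a v -> connect h b v -> a = b.
Proof.
elim/ltn_ind: n => n IH a b v hv ra rb ca cb.
case: (connect_last ca) => [eav|[p cap hpv]];
  case: (connect_last cb) => [ebv|[q cbq hqv]].
- by rewrite eav ebv.
- by move: (forallP ra q); rewrite eav hqv.
- by move: (forallP rb p); rewrite ebv hpv.
- have epq := hin hpv hqv; subst q.
  by apply: (IH (rho p) _ a b p erefl ra rb cap cbq); rewrite -hv (hrho hpv).
Qed.

Definition root v := odflt v [pick r | isroot r && connect h r v].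

Lemma rootP v : isroot (root v) && connect h (root v) v.
Proof.
rewrite /root; case: pickP => [r //|H].
by case: (@exists_root_aux (rho v) v erefl) => r Hr; have := H r; rewrite Hr.
Qed.

Lemma root_step a b : h a b -> root a = root b.
Proof.
move=> hab; have /andP[ra ca] := rootP a; have /andP[rb cb] := rootP b.
exact: (root_uniq_aux erefl ra rb (connect_trans ca (connect1 hab)) cb).
Qed.

Lemma connect_inv (T : Type) (e : rel V) (f : V -> T) :
  (forall a b, e a b -> f a = f b) -> forall x y, connect e x y -> f x = f y.
Proof.
move=> He x y /connectP [p pp ->]; elim: p x pp => [|b p IH] x //= /andP[exb pb].
by rewrite (He _ _ exb) IH.
Qed.

Let s := fun a b => h a b || h b a.

Lemma s_sym : symmetric s.
Proof. by move=> a b; rewrite /s orbC. Qed.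

Lemma root_wcomp x y : y \in wcomp h x -> root y = root x.
Proof.
rewrite inE => cxy; symmetry; apply: (connect_inv (e := s)) cxy => a b.
by case/orP => [/root_step|/root_step ->].
Qed.

Lemma seq_top (p : seq V) : uniq p -> 3 <= size p -> ~~ cycle (uadj h) p.
Proof.
case: p => [|x0 p0] // up sp; set p := x0 :: p0.
have x0p : x0 \in p by rewrite inE eqxx.
case: (arg_maxnP rho (P := mem p) x0p) => m mp mmax.
case: (rot_to mp) => i q eq.
rewrite -(rot_cycle i) eq; apply/negP.
have : uniq (m :: q) by rewrite -eq rot_uniq.
have : size (m :: q) >= 3 by rewrite -eq size_rot.
have inp : forall v, v \in m :: q -> rho v <= rho m.
  by move=> v; rewrite -eq mem_rot => /mmax.
case: q inp eq => [|a [|c q3]] //= inp _ _ /andP[_ /andP[naq _]].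
rewrite rcons_path => /andP[uma /andP[_ ub]].
set b := last c q3 in ub.
have bin : b \in c :: q3 := mem_last c q3.
have anb : a != b by apply: contraNneq naq => ->.
move: uma ub; rewrite /uadj /= => /andP[_ /orP[hma|ham]] /and3P[_ _ /orP[hbm|hmb]].
- by have := inp a; rewrite (hrho hma) !inE eqxx orbT ltnn => /(_ isT).
- by have := inp a; rewrite (hrho hma) !inE eqxx orbT ltnn => /(_ isT).
- by rewrite (hin ham hbm) eqxx in anb.
- have bin2 : b \in [:: m, a, c & q3] by rewrite in_cons in_cons bin !orbT.
  by have := inp b bin2; rewrite (hrho hmb) ltnn.
Qed.

Lemma forest x : rooted_dtree h (wcomp h x) (root x).
Proof.
set C := wcomp h x; set r := root x.
have memC : forall y z, y \in C -> s y z -> z \in C.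
  by move=> y z; rewrite !inE => cy syz; apply: connect_trans cy (connect1 syz).
have hC : forall y z, y \in C -> h y z -> z \in C.
  by move=> y z yC hyz; apply: memC yC _; rewrite /s hyz.
have hC' : forall y z, y \in C -> h z y -> z \in C.
  by move=> y z yC hyz; apply: memC yC _; rewrite /s hyz orbT.
have /andP[rr crx] := rootP x.
have rC : r \in C.
  rewrite inE (sym_connect_sym s_sym).
  by apply: connect_sub crx => a b hab; apply: connect1; rewrite /s hab.
have pathC : forall p a, a \in C -> path h a p ->
    connect (fun a b => [&& a \in C, b \in C & h a b]) a (last a p).
  elim => [|b p IH] a aC //= /andP[hab pb].
  have bC := hC _ _ aC hab.
  by apply: connect_trans (IH _ bC pb); apply: connect1; rewrite aC bC hab.
have dirC : forall v, v \in C ->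
    connect (fun a b => [&& a \in C, b \in C & h a b]) r v.
  move=> v vC; have /andP[_ /connectP[p pp ev]] := rootP v.
  have e := root_wcomp vC; rewrite /r -e {2}ev; apply: pathC => //; rewrite e //.
have noloop : forall y, ~~ h y y.
  by move=> y; apply/negP => /hrho /n_Sn.
split => //; split; first by move=> y _; apply: noloop.
split.
  move=> y z _ _; apply/negP => /andP[/hrho e1 /hrho e2]; lia.
split.
  have Rsym : symmetric (fun a b => [&& a \in C, b \in C & uadj h a b]).
    move=> a b /=; rewrite /uadj /=.
    by case: (a \in C); case: (b \in C) => //=; rewrite eq_sym orbC.
  have dirU : forall v, v \in C ->
      connect (fun a b => [&& a \in C, b \in C & uadj h a b]) r v.
    move=> v vC; apply: connect_sub (dirC v vC) => a b /and3P[aC bC hab].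
    apply: connect1; rewrite aC bC /uadj /= hab andbT.
    by apply: contraTneq hab => ->; apply: noloop.
  move=> y z yC zC; apply: connect_trans (dirU z zC).
  by rewrite (sym_connect_sym Rsym); apply: dirU.
split.
  by case=> p [up sp _ cp]; have := seq_top up sp; rewrite cp.
split => //.
move=> s0 s0C; split => [H|->]; last by move=> y _; apply: (forallP rr y).
have rs0 : isroot s0.
  apply/forallP => y; apply/negP => hy; have := H y (hC' s0 y s0C hy).
  by rewrite hy.
have /andP[rs cs] := rootP s0.
rewrite /r -(root_wcomp s0C).
exact: (root_uniq_aux erefl rs0 rs (connect0 _ _) cs).
Qed.
End Forest.

Section Comb.
Variable V : finType.
Definition lab (S : {set {set V}}) x := [exists A in S, (x \in A) && (A :\ x \in S)].

Lemma key n : forall (X : {set V}) (S : {set {set V}}), #|X| = n ->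
  (forall A, A \in S -> A \subset X) -> set0 \in S ->
  (forall x, x \in X -> lab S x) -> #|S| <= n.+1 ->
  forall A x1 x2, A \in S -> x1 \in A -> x2 \in A -> A :\ x1 \in S -> A :\ x2 \in S ->
  x1 = x2.
Proof.
elim: n => [|n IH] X S cX sub s0 labS cS A x1 x2 AS x1A x2A A1 A2.
  by move/cards0_eq: cX => X0; move: (subsetP (sub A AS) x1 x1A); rewrite X0 inE.
apply/eqP; apply/negPn/negP => ne.
case: (pickP [pred z in X | (z != x1) && (z != x2)]) => [z /andP[zX /andP[z1 z2]] | none].
  pose f := fun B : {set V} => B :\ z.
  have comm : forall B y, (B :\ z) :\ y = (B :\ y) :\ z.
    by move=> B y; apply/setP => t; rewrite !inE; case: (t == y); case: (t == z).
  have ec : #|X :\ z| = n by move: cX; rewrite (cardsD1 z X) zX add1n => -[].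
  have h1 : forall A0, A0 \in f @: S -> A0 \subset X :\ z.
    by move=> A0 /imsetP[B BS ->]; apply: setSD; apply: sub.
  have h2 : set0 \in f @: S by apply/imsetP; exists set0 => //; rewrite /f set0D.
  have h3 : forall y, y \in X :\ z -> lab (f @: S) y.
    move=> y; rewrite !inE => /andP[yz yX]; case/existsP: (labS y yX) => B /and3P[BS yB By].
    apply/existsP; exists (f B); apply/and3P; split.
    - by apply/imsetP; exists B.
    - by rewrite /f !inE yz yB.
    - by apply/imsetP; exists (B :\ y) => //; rewrite /f comm.
  have h4 : #|f @: S| <= n.+1.
    case/existsP: (labS z zX) => B /and3P[BS zB Bz].
    have : #|f @: S| != #|S|.
      apply/negP => /imset_injP inj.
      have := inj B (B :\ z) BS Bz; rewrite /f.
      have -> : B :\ z :\ z = B :\ z by apply/setP => t; rewrite !inE andbA andbb.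
      move=> /(_ erefl) eB; by move: zB; rewrite eB setD11.
    by move=> ne'; rewrite -ltnS (leq_trans _ cS) // ltn_neqAle ne' leq_imset_card.
  have := IH (X :\ z) (f @: S) ec h1 h2 h3 h4 (A :\ z) x1 x2.
  have m1 : forall B, B \in S -> B :\ z \in f @: S by move=> B BS; apply/imsetP; exists B.
  rewrite (m1 _ AS) !inE x1A x2A eq_sym z1 eq_sym z2 /= comm (m1 _ A1) comm (m1 _ A2).
  by move=> /(_ isT isT isT isT isT) e; rewrite e eqxx in ne.
have sX : X \subset [set x1; x2].
  apply/subsetP => t tX; have := none t; rewrite /= tX !inE.
  by case: (t == x1); case: (t == x2).
have := subset_leq_card sX; rewrite cards2 cX.
have neq : forall (B C : {set V}) t, t \in B -> t \notin C -> B != C.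
  by move=> B C t tB; apply: contra => /eqP <-.
have n1 : x1 \notin A :\ x1 by rewrite setD11.
have n2 : x2 \notin A :\ x2 by rewrite setD11.
have i21 : x2 \in A :\ x1 by rewrite !inE x2A andbT eq_sym.
have i12 : x1 \in A :\ x2 by rewrite !inE x1A andbT.
have e0 : forall t, t \notin (set0 : {set V}) by move=> t; rewrite in_set0.
have u : uniq [:: A; A :\ x1; A :\ x2; set0].
  rewrite /= !in_cons in_nil !negb_or (neq _ _ _ x1A n1) (neq _ _ _ x2A n2)
    (neq _ _ _ x1A (e0 x1)) (neq _ _ _ i21 n2) (neq _ _ _ i21 (e0 x2))
    (neq _ _ _ i12 (e0 x1)) //.
have : #|[:: A; A :\ x1; A :\ x2; set0]| <= #|S|.
  apply: subset_leq_card; apply/subsetP => B; rewrite !in_cons in_nil orbF.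
  by case/or4P => /eqP ->.
rewrite (card_uniqP u) /=; move: cS; rewrite ne /=; lia.
Qed.
End Comb.

Section Main.
Variables (V : finType) (arc : rel V).
Hypothesis loc : locatable arc.
Hypothesis gam : gamma_OL arc = #|V|.

Lemma gamma_le S : is_OLD arc S -> gamma_OL arc <= #|S|.
Proof.
move=> oS.
have : forall r : seq {set V}, S \in r ->
    \big[minn/#|V|]_(T <- r | is_OLD arc T) #|T| <= #|S|.
  elim => [|T r IH] //; rewrite in_cons big_cons => /orP[/eqP <-|Sr].
    by rewrite oS geq_minl.
  case: (is_OLD arc T); last exact: IH.
  by apply: leq_trans (IH Sr); apply: geq_minr.
by apply; rewrite mem_index_enum.
Qed.

Lemma forced x : dom_forced arc x || loc_forced arc x.
Proof.
case: (boolP (dom_forced arc x || loc_forced arc x)) => // /norP[nd nl].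
case: loc => S0 /andP[dom0 sep0].
have oS : is_OLD arc [set~ x].
  apply/andP; split.
    apply/forallP => v; case: (boolP [exists u in [set~ x], u \in Nin arc v]) => // /existsPn H.
    case/existsP: (forallP dom0 v) => u0 /andP[_]; rewrite inE => au0.
    case/negP: nd; apply/existsP; exists v; apply/eqP/setP => u.
    rewrite !inE; case: (eqVneq u x) => [->|ne].
      case: (eqVneq u0 x) au0 => [-> //|ne0 au0].
      by have := H u0; rewrite !inE ne0 au0.
    by have := H u; rewrite !inE ne /= => /negbTE.
  apply/forallP => u; apply/forallP => w; apply/implyP => uw.
  case: (boolP [exists s in [set~ x], (s \in Nin arc u) != (s \in Nin arc w)]) => // /existsPn H.
  case/existsP: (implyP (forallP (forallP sep0 u) w) uw) => s0 /andP[_]; rewrite !inE => d0.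
  case/negP: nl; apply/existsP; exists u; apply/existsP; exists w; rewrite uw /=.
  apply/eqP/setP => t; rewrite /symdiff !inE.
  case: (eqVneq t x) => [->|ne].
    case: (eqVneq s0 x) d0 => [-> |ne0 d0]; first by case: (arc x u); case: (arc x w).
    by have := H s0; rewrite !inE ne0 d0.
  by have := H t; rewrite !inE ne /= negbK => /eqP ->; case: (arc t w).
have := gamma_le oS; rewrite gam cardsC1.
have vpos : 0 < #|V| by apply/card_gt0P; exists x.
by case: #|V| vpos => // k _; rewrite /= ltnn.
Qed.

Lemma tail x : exists y, forcing arc x y.
Proof.
case/orP: (forced x) => [/existsP[w e]|/existsP[a /existsP[b /andP[ab e]]]].
  exists w; rewrite /forcing e orTb andbT.
  have : x \in Nin arc w by rewrite (eqP e) set11.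
  by rewrite inE.
have : x \in symdiff (Nin arc a) (Nin arc b) by rewrite (eqP e) set11.
have ee : forall t, (t \in symdiff (Nin arc a) (Nin arc b)) = (t \in [set x]) by move=> t; rewrite (eqP e).
rewrite /symdiff !inE => /orP[/andP[nxb xa]|/andP[nxa xb]].
  exists a; rewrite /forcing xa /=; apply/orP; right; apply/existsP; exists b.
  apply/eqP/setP => t; have := ee t; rewrite /symdiff !inE.
  case: (eqVneq t x) => [->|ne]; first by rewrite (negbTE nxb).
  by case: (arc t a); case: (arc t b).
exists b; rewrite /forcing xb /=; apply/orP; right; apply/existsP; exists a.
apply/eqP/setP => t; have := ee t; rewrite /symdiff !inE.
case: (eqVneq t x) => [->|ne]; first by rewrite (negbTE nxa).
by case: (arc t a); case: (arc t b).
Qed.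

Definition SS : {set {set V}} := set0 |: [set Nin arc v | v in V].

Lemma forcing_S x y : forcing arc x y ->
  [/\ Nin arc y \in SS, x \in Nin arc y & Nin arc y :\ x \in SS].
Proof.
rewrite /forcing => /andP[axy /orP[e|/existsP[z e]]]; split.
- by rewrite !inE imset_f ?orbT.
- by rewrite inE.
- by rewrite (eqP e) setDv !inE eqxx.
- by rewrite !inE imset_f ?orbT.
- by rewrite inE.
- by rewrite -(eqP e) !inE imset_f ?orbT.
Qed.

Lemma head_uniq x1 x2 y : forcing arc x1 y -> forcing arc x2 y -> x1 = x2.
Proof.
move=> /forcing_S[yS x1y S1] /forcing_S[_ x2y S2].
have c1 : #|[set: V]| = #|V| by rewrite cardsT.
have c2 : forall A, A \in SS -> A \subset [set: V] by move=> A _; apply: subsetT.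
have c3 : set0 \in SS by rewrite !inE eqxx.
have c4 : forall x, x \in [set: V] -> lab SS x.
  move=> x _; case: (tail x) => w /forcing_S[wS xw Sw].
  by apply/existsP; exists (Nin arc w); rewrite wS xw Sw.
have c5 : #|SS| <= #|V|.+1.
  rewrite /SS cardsU1; have := leq_imset_card (Nin arc) V.
  by case: (set0 \notin _) => /=; rewrite ?add1n ?add0n ?ltnS // => /leqW.
exact: (key c1 c2 c3 c4 c5 yS x1y x2y S1 S2).
Qed.

Lemma head_exists y : exists x, forcing arc x y.
Proof.
pose P := [set p : V * V | forcing arc p.1 p.2].
have c1 : #|V| <= #|P|.
  have : [set: V] \subset [set p.1 | p in P].
    apply/subsetP => x _; case: (tail x) => w fw; apply/imsetP; exists (x, w) => //.
    by rewrite inE.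
  move=> /subset_leq_card; rewrite cardsT => le; apply: leq_trans le _.
  exact: leq_imset_card.
have inj : {in P &, injective snd}.
  move=> [a b] [c d]; rewrite !inE /= => fab fcd ebd; subst d.
  by rewrite (head_uniq fab fcd).
have : [set p.2 | p in P] == [set: V].
  by rewrite eqEcard subsetT cardsT (card_in_imset inj).
move/eqP/setP/(_ y); rewrite inE => /imsetP[[a b]]; rewrite inE /= => fab ->.
by exists a.
Qed.

Lemma fminusP y : forcing arc (fminus arc y) y.
Proof.
rewrite /fminus; case: pickP => [x //|H].
by case: (head_exists y) => x fx; have := H x; rewrite fx.
Qed.

Lemma Nin_inj a b : Nin arc a = Nin arc b -> a = b.
Proof.
case: loc => S0 /andP[_ sep0] e; apply/eqP; apply/negPn/negP => ab.
case/existsP: (implyP (forallP (forallP sep0 a) b) ab) => s /andP[_].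
by rewrite e eqxx.
Qed.

Lemma Harc_forcing x y : Harc arc x y ->
  exists2 v, loc_forced arc v & [/\ forcing arc v y, v \in Nin arc y & Nin arc x = Nin arc y :\ v].
Proof.
case/existsP => v /and3P[lv vy e]; exists v => //; split => //; last exact: eqP.
have avy : arc v y by move: vy; rewrite inE.
rewrite /forcing avy /=.
by apply/orP; right; apply/existsP; exists x.
Qed.

Lemma Harc_rho x y : Harc arc x y -> #|Nin arc y| = (#|Nin arc x|).+1.
Proof.
case/Harc_forcing => v _ [_ vy e].
by rewrite e (cardsD1 v (Nin arc y)) vy add1n.
Qed.

Lemma Harc_in a b y : Harc arc a y -> Harc arc b y -> a = b.
Proof.
case/Harc_forcing => v _ [fv _ ea]; case/Harc_forcing => w _ [fw _ eb].
by apply: Nin_inj; rewrite ea eb (head_uniq fv fw).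
Qed.

End Main.

Theorem theorem17 (V : finType) (arc : rel V) :
  locatable arc -> gamma_OL arc = #|V| ->
  forest_of_rooted_trees (Harc arc) /\
  (forall r, rooted_dtree (Harc arc) (wcomp (Harc arc) r) r ->
     dom_forced arc (fminus arc r) /\ #|Nin arc r| = 1) /\
  (forall v, ~ rooted_dtree (Harc arc) (wcomp (Harc arc) v) v ->
     loc_forced arc (fminus arc v) /\ exists u, Harc arc u v).
Proof.
move=> loc gam.
have F := forest (h := Harc arc) (rho := fun v => #|Nin arc v|)
  (@Harc_rho V arc) (@Harc_in V arc loc gam).
split; first by move=> x; eexists; apply: F.
split.
  move=> r [_ [_ [_ [_ [_ [H6 _]]]]]].
  have rC : r \in wcomp (Harc arc) r by rewrite inE connect0.
  have nor : forall x, ~~ Harc arc x r.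
    move=> x; apply/negP => hx.
    have xC : x \in wcomp (Harc arc) r by rewrite inE; apply: connect1; rewrite hx orbT.
    by have := (H6 r rC).2 erefl x xC; rewrite hx.
  have := fminusP loc gam r; set f := fminus arc r.
  rewrite /forcing => /andP[af /orP[e|/existsP[z /eqP ez]]].
    split; first by apply/existsP; exists r.
    by rewrite (eqP e) cards1.
  exfalso; have zr : z != r.
    apply/eqP => ezr; have : f \in Nin arc r :\ f by rewrite -ez ezr inE.
    by rewrite setD11.
  have lf : loc_forced arc f.
    apply/existsP; exists z; apply/existsP; exists r; rewrite zr /=.
    apply/eqP/setP => t; rewrite /symdiff ez !inE.
    case: (eqVneq t f) => [->|ne]; first by rewrite af.
    by case: (arc t r).
  have : Harc arc z r.
    by apply/existsP; exists f; rewrite lf ez eqxx andbT inE.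
  by rewrite (negbTE (nor z)).
move=> v Hv.
case: (boolP [exists u, Harc arc u v]) => [/existsP[u hu]|/existsPn nou].
  case: (Harc_forcing hu) => w lw [fw _ _].
  by rewrite (head_uniq loc gam (fminusP loc gam v) fw); split => //; exists u.
exfalso; apply: Hv.
have := F v; case=> vC [_ [_ [_ [_ [H6 _]]]]].
have vC' : v \in wcomp (Harc arc) v by rewrite inE connect0.
have e := (H6 v vC').1 (fun x _ => nou x).
by move: (F v); rewrite -e.
Qed.
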